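(* In the setting below, $\lambda_P(\mathrm{I}_{n-t}(\mathbf{J})) = \Delta^{n-t}\mathcal{O}$ as ideals of $\mathcal{O}$, where $\mathbf{J}$ is the Jacobian matrix of $f_1,\ldots,f_{n-t}$.
   Context: Let $\mathcal{O}$ be a discrete valuation ring with uniformiser $\varpi$. Let $2\le m\le n$, $t=m-1$, $P=\mathcal{O}[X_{m\times n}]$ (polynomial ring in the entries of an $m\times n$ matrix of indeterminates $X$), $X_{[a,b]}$ the submatrix of columns $a$ through $b$, and $f_k=\det X_{[k,k+t]}$ for $1\le k\le n-t$. The Jacobian $\mathbf{J}$ is the $mn\times(n-t)$ matrix over $P$ with rows indexed by the variables $X_{ij}$, columns indexed by $k$, and entries $\partial f_k/\partial X_{ij}$; $\mathrm{I}_{n-t}(\mathbf{J})$ is its ideal of $(n-t)\times(n-t)$ minors. Fix integers $0\le a_1\le\cdots\le a_t$, let $D=\operatorname{diag}(\varpi^{a_1},\ldots,\varpi^{a_t})$, $\Delta=\det D$. Let $\mathbf{a}\in\mathcal{O}^{m\times n}$ have zero last row and top $t$ entries of column $j$ equal to the $r$-th column of $D$, where $1\le r\le t$, $r\equiv j\pmod t$. Let $\lambda_P\colon P\to\mathcal{O}$ be the $\mathcal{O}$-algebra map $X_{ij}\mapsto\mathbf{a}_{ij}$. *)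

(* Defs.v *)
From HB Require Import structures.
From mathcomp Require Import all_boot all_order all_algebra.
From mathcomp Require Import mpoly.
Set Implicit Arguments. Unset Strict Implicit. Unset Printing Implicit Defensive.
Import Order.TTheory GRing.Theory.
Local Open Scope ring_scope.

Definition is_DVR_unif (O : idomainType) (w : O) : Prop :=
  [/\ w != 0, w \isn't a GRing.unit &
      forall x : O, x != 0 -> exists u k, u \is a GRing.unit /\ x = u * w ^+ k].

Definition ideal_gen (A : comNzRingType) (S : A -> Prop) : A -> Prop :=
  fun x => exists s : seq (A * A),
    (forall q, q \in s -> S q.2) /\ x = \sum_(q <- s) q.1 * q.2.

(* P = O[X_{m x n}]; the variable X_{ij} (0-based i < m, j < n) is the
   variable of index i*n + j in {mpoly O[m*n]}. Out of range entries are 0. *)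
Definition Xvar (O : comNzRingType) (m n i j : nat) : {mpoly O[m * n]} :=
  if ((i < m) && (j < n))%N then
    match (insub (i * n + j)%N : option 'I_(m * n)) with
    | Some v => 'X_v | None => 0 end
  else 0.

(* f_k = det X_[k, k+t] (0-based k < n - t, t = m - 1), columns k..k+m-1. *)
Definition fk (O : comNzRingType) (m n k : nat) : {mpoly O[m * n]} :=
  \det (\matrix_(i < m, j < m) Xvar O m n i (k + j)).

Definition jacobian (O : comNzRingType) (m n : nat)
  : 'M[{mpoly O[m * n]}]_(m * n, n - m.-1) :=
  \matrix_(v < m * n, k < n - m.-1) mderiv v (fk O m n k).

Definition jac_minor (O : comNzRingType) (m n : nat) (p : {mpoly O[m * n]}) : Prop :=
  exists f : 'I_(n - m.-1) -> 'I_(m * n),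
    (forall i j : 'I_(n - m.-1), (i < j)%N -> (f i < f j)%N) /\
    p = \det (rowsub f (jacobian O m n)).

(* The point a: entry (i, j) (0-based) is 0 in the last row i = t, and for
   i < t it is the (i, r) entry of D, where r - 1 = j mod t (0-based). *)
Definition apt (O : comNzRingType) (m n : nat) (w : O) (e : nat -> nat)
  (i j : nat) : O :=
  if ((i < m.-1) && (i == j %% m.-1))%N then w ^+ e i else 0.

Definition lambdaP (O : comNzRingType) (m n : nat) (w : O) (e : nat -> nat)
  (p : {mpoly O[m * n]}) : O :=
  p.@[fun v : 'I_(m * n) => apt m n w e (v %/ n) (v %% n)].

(* Main.v *)
Require Import Defs.
From HB Require Import structures.
From mathcomp Require Import all_boot all_order all_algebra.
From mathcomp Require Import mpoly.
From mathcomp Require Import fingroup perm zify.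
Set Implicit Arguments. Unset Strict Implicit. Unset Printing Implicit Defensive.
Import GRing.Theory.
Local Open Scope ring_scope.

Lemma mderivXU (R : comNzRingType) (N : nat) (i j : 'I_N) :
  mderiv i ('X_j : {mpoly R[N]}) = (j == i)%:R.
Proof.
rewrite mderivX mnm1E; case: eqP => [->|_]; last by rewrite scale0r.
have -> : (U_(i) - U_(i) = 0)%MM by apply/mnmP=> q; rewrite !mnmE subnn.
by rewrite scale1r mpolyX0.
Qed.

Lemma mderiv_det0 (R : comNzRingType) (N : nat) (i : 'I_N) k
  (A : 'M[{mpoly R[N]}]_k) :
  (forall a b, mderiv i (A a b) = 0) -> mderiv i (\det A) = 0.
Proof.
move=> H; rewrite /determinant raddf_sum /=; apply: big1 => s _.
rewrite mderivM.
have Hp : mderiv i (\prod_j A j (s j)) = 0.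
  elim/big_rec: _ => [|j p _ Hp]; first by rewrite -mpolyC1 mderivC.
  by rewrite mderivM H Hp mul0r mulr0 addr0.
have Hs : mderiv i ((-1) ^+ s : {mpoly R[N]}) = 0.
  case: (odd_perm s); rewrite ?expr1 ?expr0 -?mpolyC1 ?mderivC //.
  by rewrite mderivN mderivC oppr0.
by rewrite Hp Hs mul0r mulr0 addr0.
Qed.

Lemma mderiv_det_row (R : comNzRingType) (N : nat) (i : 'I_N) k
  (A : 'M[{mpoly R[N]}]_k) (r : 'I_k) :
  (forall a b, a != r -> mderiv i (A a b) = 0) ->
  mderiv i (\det A) = \sum_c mderiv i (A r c) * cofactor A r c.
Proof.
move=> H; rewrite (expand_det_row _ r) raddf_sum /=; apply: eq_bigr => c _.
rewrite mderivM /cofactor [X in _ + _ * X]mderivM mderiv_det0.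
  have Hs : forall q, mderiv i ((-1) ^+ q : {mpoly R[N]}) = 0.
    elim=> [|q IH]; first by rewrite expr0 -mpolyC1 mderivC.
    by rewrite exprS mderivM IH mulr0 mderivN -mpolyC1 mderivC oppr0 mul0r addr0.
  by rewrite Hs mul0r !mulr0 !addr0 mulr0 addr0.
by move=> a b; rewrite !mxE H // eq_sym neq_lift.
Qed.

Definition av (O : comNzRingType) t n (w : O) (e : nat -> nat) :
  'I_(t.+1 * n) -> O := fun v => apt t.+1 n w e (v %/ n) (v %% n).

Arguments av : clear implicits.

Definition Ak (O : comNzRingType) t n (w : O) (e : nat -> nat) (k : nat) :
  'M[O]_t.+1 := \matrix_(i < t.+1, c < t.+1) apt t.+1 n w e i (k + c).

Lemma idx_lt t n i j : (i < t.+1)%N -> (j < n)%N -> (i * n + j < t.+1 * n)%N.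
Proof. move=> Hi Hj; nia. Qed.

Lemma Xvar_X (O : comNzRingType) t n i j (Hi : (i < t.+1)%N) (Hj : (j < n)%N) :
  Xvar O t.+1 n i j = 'X_(Ordinal (idx_lt Hi Hj)).
Proof.
rewrite /Xvar Hi Hj /=; case: insubP => [u Hu Hval|]; last by rewrite idx_lt.
by congr (mpolyX _ _); apply/mnmP => q; rewrite !mnm1E; congr (_ == q); apply: val_inj.
Qed.

Lemma mderiv_Xvar (O : comNzRingType) t n i j (v : 'I_(t.+1 * n)) :
  (i < t.+1)%N -> (j < n)%N ->
  mderiv v (Xvar O t.+1 n i j) = ((i * n + j)%N == val v)%:R.
Proof.
move=> Hi Hj; rewrite (@Xvar_X O t n i j Hi Hj) mderivXU; done.
Qed.

Lemma lam_Xvar (O : comNzRingType) t n (w : O) (e : nat -> nat) i j :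
  (i < t.+1)%N -> (j < n)%N ->
  (Xvar O t.+1 n i j).@[av O t n w e] = apt t.+1 n w e i j.
Proof.
move=> Hi Hj; rewrite (@Xvar_X O t n i j Hi Hj) mevalXU /av /=.
have n0 : (0 < n)%N by apply: leq_ltn_trans Hj.
by rewrite divnMDl // modnMDl divn_small // modn_small // addn0.
Qed.

Arguments Ak : clear implicits.

Lemma vdiv_lt t n (v : 'I_(t.+1 * n)) : (v %/ n < t.+1)%N.
Proof. have := ltn_ord v; move: (nat_of_ord v) => x; clear v.
case: n => [|n]; first by rewrite muln0.
by rewrite ltn_divLR. Qed.

Lemma kc_lt t n (k : 'I_(n - t)) (c : 'I_t.+1) : (k + c < n)%N.
Proof. have := ltn_ord k; have := ltn_ord c; lia. Qed.

Lemma J_entry (O : comNzRingType) t n (w : O) (e : nat -> nat)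
  (v : 'I_(t.+1 * n)) (k : 'I_(n - t)) :
  (jacobian O t.+1 n v k).@[av O t n w e] =
  \sum_(c < t.+1) ((v %/ n * n + (k + c))%N == val v)%:R *
     cofactor (Ak O t n w e k) (Ordinal (vdiv_lt v)) c.
Proof.
rewrite mxE /fk (@mderiv_det_row _ _ v _ _ (Ordinal (vdiv_lt v))).
  rewrite rmorph_sum /=; apply: eq_bigr => c _.
  rewrite mevalM mxE mderiv_Xvar ?kc_lt // rmorph_nat; congr (_ * _).
  rewrite -cofactor_map_mx; congr cofactor.
  by apply/matrixP => a b; rewrite !mxE -(@lam_Xvar O t n w e) ?kc_lt.
move=> a b Hab; rewrite mxE mderiv_Xvar ?kc_lt //.
case: eqP => // Heq; exfalso; move/negP: Hab; apply; apply/eqP/val_inj => /=.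
have n0 : (0 < n)%N by have := kc_lt k b; lia.
by rewrite -Heq divnMDl // divn_small ?addn0 // kc_lt.
Qed.

Definition Bm t (k : nat) (c : 'I_t.+1) (O : comNzRingType) : 'M[O]_t :=
  \matrix_(i < t, s < t) ((val i == (k + lift c s) %% t)%N)%:R.

Lemma cof_max (O : comNzRingType) t n (w : O) e k (c : 'I_t.+1) :
  cofactor (Ak O t n w e k) ord_max c =
  (-1) ^+ (t + c) * ((\prod_(i < t) w ^+ e i) * \det (Bm k c O)).
Proof.
rewrite /cofactor /=; congr (_ * _).
have -> : row' ord_max (col' c (Ak O t n w e k)) =
   diag_mx (\row_(i < t) w ^+ e i) *m Bm k c O.
  apply/matrixP => i s; rewrite mul_diag_mx !mxE /apt /=.
  have -> : bump t i = i by rewrite /bump leqNgt ltn_ord.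
  rewrite ltn_ord /=; case: eqP => _; by rewrite ?mulr1 ?mulr0.
by rewrite det_mulmx det_diag; congr (_ * _); apply: eq_bigr => i _; rewrite mxE.
Qed.

Lemma cof_nmax (O : comNzRingType) t n (w : O) e k (r c : 'I_t.+1) :
  r != ord_max -> cofactor (Ak O t n w e k) r c = 0.
Proof.
move=> Hr; rewrite /cofactor; case: (unlift_some Hr) => j0 Hl _.
rewrite (expand_det_row _ j0) big1 ?mulr0 // => s _.
by rewrite !mxE -Hl /apt /= ltnn mul0r.
Qed.

Lemma detB0_unit (O : comUnitRingType) t k (Ht : (0 < t)%N) :
  \det (Bm k (ord0 : 'I_t.+1) O) \is a GRing.unit.
Proof.
pose f := fun s : 'I_t => Ordinal (ltn_pmod (k + s.+1) Ht).
have finj : injective f.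
  move=> s1 s2 /(congr1 val) /= /eqP H; apply/val_inj => /=.
  have H' : ((k.+1 + s1) == (k.+1 + s2) %[mod t])%N by rewrite !addSnnS.
  by move: H'; rewrite eqn_modDl !modn_small // => /eqP.
have -> : Bm k (ord0 : 'I_t.+1) O = (perm_mx (perm finj))^T.
  apply/matrixP => i s; rewrite !mxE permE /= eq_sym.
  by rewrite /bump leq0n add1n.
by rewrite det_tr det_perm unitrX // unitrN1.
Qed.

Lemma entry_div (O : comNzRingType) t n (w : O) e
  (v : 'I_(t.+1 * n)) (k : 'I_(n - t)) :
  exists b, (jacobian O t.+1 n v k).@[av O t n w e] =
            (\prod_(i < t) w ^+ e i) * b.
Proof.
rewrite J_entry.
set r := Ordinal (vdiv_lt v).
pose g (c : 'I_t.+1) : O :=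
  if r == ord_max then (-1) ^+ (t + c) * \det (Bm k c O) else 0.
have Hg : forall c, cofactor (Ak O t n w e k) r c = (\prod_(i < t) w ^+ e i) * g c.
  move=> c; rewrite /g; case: eqP => [->|/eqP Hr].
    by rewrite cof_max mulrCA.
  by rewrite cof_nmax // mulr0.
exists (\sum_(c < t.+1) ((v %/ n * n + (k + c))%N == val v)%:R * g c).
rewrite big_distrr /=; apply: eq_bigr => c _.
by rewrite Hg mulrCA.
Qed.

Lemma minor_div (O : comNzRingType) t n (w : O) e p :
  jac_minor (O := O) (m := t.+1) (n := n) p ->
  exists c, p.@[av O t n w e] = (\prod_(i < t) w ^+ e i) ^+ (n - t) * c.
Proof.
move=> [f [_ ->]].
pose D := \prod_(i < t) w ^+ e i.
have ex (i j : 'I_(n - t)) : exists b,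
    (jacobian O t.+1 n (f i) j).@[av O t n w e] == D * b.
  by have [b Hb] := entry_div w e (f i) j; exists b; apply/eqP.
pose b (i : 'I_(n - t)) (j : 'I_(n - t)) := xchoose (ex i j).
exists (\det (\matrix_(i, j) b i j)).
rewrite -det_map_mx -detZ; congr (\det _).
apply/matrixP => i j; rewrite !mxE.
have H := eqP (xchooseP (ex i j)); rewrite -/(b i j) in H.
rewrite /jacobian mxE in H; exact: H.
Qed.

Lemma ideal_div (O : comNzRingType) t n (w : O) e p :
  ideal_gen (@jac_minor O t.+1 n) p ->
  exists c, p.@[av O t n w e] = (\prod_(i < t) w ^+ e i) ^+ (n - t) * c.
Proof.
move=> [s [Hs ->]]; elim: s Hs => [|q s IH] Hs.
  by exists 0; rewrite big_nil meval0 mulr0.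
have [c1 Hc1] := IH (fun q' Hq' => Hs q' (mem_behead (s := q :: s) Hq')).
have [c2 Hc2] := minor_div w e (Hs q (mem_head q s)).
exists (q.1.@[av O t n w e] * c2 + c1).
rewrite big_cons mevalD mevalM Hc1 Hc2 mulrDr; congr (_ + _).
by rewrite mulrCA.
Qed.

Lemma fidx_lt t n (j : 'I_(n - t)) : (t * n + j < t.+1 * n)%N.
Proof. have := ltn_ord j; nia. Qed.

Lemma exists_minor (O : idomainType) t n (w : O) e :
  (0 < t)%N -> (t.+1 <= n)%N ->
  exists p u, jac_minor (O := O) (m := t.+1) (n := n) p /\
    p.@[av O t n w e] = (\prod_(i < t) w ^+ e i) ^+ (n - t) * u /\
    u \is a GRing.unit.
Proof.
move=> Ht Htn.
pose D := \prod_(i < t) w ^+ e i.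
pose f (j : 'I_(n - t)) : 'I_(t.+1 * n) := Ordinal (fidx_lt j).
have n0 : (0 < n)%N by lia.
have fdiv j : (f j %/ n = t)%N.
  by rewrite /= divnMDl // divn_small ?addn0 //; have := ltn_ord j; lia.
have fr j : Ordinal (vdiv_lt (f j)) = ord_max by apply: val_inj; rewrite /= fdiv.
have Hent (j k : 'I_(n - t)) : (jacobian O t.+1 n (f j) k).@[av O t n w e] =
    \sum_(c < t.+1) ((k + c)%N == j)%:R * cofactor (Ak O t n w e k) ord_max c.
  rewrite J_entry fr; apply: eq_bigr => c _; rewrite fdiv /= eqn_add2l //.
pose u (j : 'I_(n - t)) : O := (-1) ^+ t * \det (Bm j (ord0 : 'I_t.+1) O).
exists (\det (rowsub f (jacobian O t.+1 n))), (\prod_j u j).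
split; [|split].
- by exists f; split => // i j /=; rewrite ltn_add2l.
- rewrite -det_map_mx det_trig.
    rewrite -[X in X ^+ _ * _]/D.
    have -> : (D ^+ (n - t) = \prod_(j < n - t) D)%R by rewrite prodr_const card_ord.
    rewrite -big_split /=; apply: eq_bigr => j _.
    transitivity ((jacobian O t.+1 n (f j) j).@[av O t n w e]).
      by rewrite !mxE.
    rewrite Hent (bigD1 ord0) //= big1 ?addr0.
      by rewrite addn0 eqxx mul1r cof_max addn0 /u mulrCA.
    move=> c Hc; have -> : ((j + c)%N == j) = false.
      by apply/negbTE; move: Hc; rewrite -val_eqE /=; lia.
    by rewrite mul0r.
  apply/is_trig_mxP => i j Hij.
  transitivity ((jacobian O t.+1 n (f i) j).@[av O t n w e]).
    by rewrite !mxE.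
  rewrite Hent big1 // => c _.
  have -> : ((j + c)%N == i) = false by apply/negbTE; lia.
  by rewrite mul0r.
- apply/unitr_prod => j _; rewrite /u unitrM unitrX ?unitrN1 //.
  exact: detB0_unit.
Qed.

Unset Implicit Arguments.
Set Strict Implicit.

Theorem lemma5p6 (O : idomainType) (w : O) (m n : nat) (e : nat -> nat) :
  is_DVR_unif w -> (2 <= m)%N -> (m <= n)%N ->
  (forall i j, (i <= j)%N -> (j < m.-1)%N -> (e i <= e j)%N) ->
  forall x : O,
    (exists p, ideal_gen (@jac_minor O m n) p /\ lambdaP w e p = x) <->
    (exists c : O, x = (\prod_(i < m.-1) w ^+ e i) ^+ (n - m.-1) * c).
Proof.
case: m => [//|t] _ Hm Hn _ x /=.
split.
  move=> [p [Hp <-]].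
  exact: (ideal_div w e Hp).
move=> [c ->].
have [p0 [u [Hp0 [Hl Hu]]]] := exists_minor w e (ltnSE Hm) Hn.
exists ((c / u)%:MP * p0); split.
  exists [:: ((c / u)%:MP, p0)]; split.
    by move=> q; rewrite inE => /eqP -> /=.
  by rewrite big_cons big_nil addr0.
rewrite /lambdaP.
change (((c / u)%:MP * p0).@[av O t n w e] =
  (\prod_(i < t) w ^+ e i) ^+ (n - t) * c).
rewrite mevalM mevalC Hl mulrCA; congr (_ * _).
by rewrite divrK.
Qed.
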